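(* Let $X$ be a real Banach space and $D\subset X$ dense. Then: (1) $X$ is LOH if and only if for every $\varepsilon>0$ and $x\in D$ there exists $y\in D$ with $\|y\|\ne0$, $\big\|\|y\|x-\|x\|y\big\|>\|y\|(2\|x\|-\varepsilon)$ and $\big\|\|y\|x+\|x\|y\big\|>\|y\|(2\|x\|-\varepsilon)$; (2) $X$ is OH if and only if for every $\varepsilon>0$, $n\in\mathbb{N}$ and $x=(x_1,\dots,x_n)\in D^n$ there exists $y\in D$ with $\|y\|\ne0$ and $\big\|\|y\|x_i+\|x_i\|y\big\|>\|y\|(2\|x_i\|-\varepsilon)$ for all $i=1,\dots,n$.
   Context: $X$ is locally octahedral (LOH) if for every $\varepsilon>0$ and $x\in X$ there is $y\in S_X$ with $\|tx+y\|\ge(1-\varepsilon)(|t|\|x\|+\|y\|)$ for all $t\in\mathbb{R}$. $X$ is octahedral (OH) if for every finite-dimensional subspace $E\subset X$ and $\varepsilon>0$ there is $y\in S_X$ with $\|x+y\|\ge(1-\varepsilon)(\|x\|+\|y\|)$ for all $x\in E$. *)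

(* Defs.v *)
From HB Require Import structures.
From mathcomp Require Import all_boot all_order all_algebra.
From mathcomp Require Import all_classical all_reals all_analysis.
Set Implicit Arguments. Unset Strict Implicit. Unset Printing Implicit Defensive.
Import Order.TTheory GRing.Theory Num.Theory.
Import numFieldNormedType.Exports.
Local Open Scope classical_set_scope.
Local Open Scope ring_scope.

(* Linear span of a finite family v_1..v_n: the finite-dimensional
   subspaces of X are exactly such spans. *)
Definition finspan (R : realType) (X : normedModType R) (n : nat)
  (v : 'I_n -> X) : set X :=
  [set x | exists c : 'I_n -> R, x = \sum_(i < n) c i *: v i].

Definition LOH (R : realType) (X : normedModType R) : Prop :=
  forall (eps : R) (x : X), 0 < eps ->
    exists y : X, `|y| = 1 /\
      forall t : R, `|t *: x + y| >= (1 - eps) * (`|t| * `|x| + `|y|).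

Definition OH (R : realType) (X : normedModType R) : Prop :=
  forall (n : nat) (v : 'I_n -> X) (eps : R), 0 < eps ->
    exists y : X, `|y| = 1 /\
      forall x : X, finspan v x -> `|x + y| >= (1 - eps) * (`|x| + `|y|).

(* Main.v *)
Require Import Defs.
From HB Require Import structures.
From mathcomp Require Import all_boot all_order all_algebra.
From mathcomp Require Import all_classical all_reals all_analysis.
From mathcomp Require Import finmap.
From mathcomp Require Import ring lra.
Import Order.TTheory GRing.Theory Num.Theory.
Import numFieldNormedType.Exports.
Local Open Scope classical_set_scope.
Local Open Scope ring_scope.
Set Implicit Arguments. Unset Strict Implicit.

Section Aux.
Variables (R : realType) (X : normedModType R).

Lemma two_vec (a w : X) (eta s : R) : `|a| = 1 -> `|w| = 1 ->
  2 - eta <= `|a + w| -> 0 <= s -> (s + 1) * (1 - eta) <= `|s *: a + w|.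
Proof.
move=> na nw h s0.
have eta0 : 0 <= eta.
  have := ler_normD a w; rewrite na nw; lra.
have [s1|s1] := leP 1 s.
  have e : s *: a + w + (s - 1) *: w = s *: (a + w).
    by rewrite scalerBl scale1r scalerDr -addrA; congr (_ + _); rewrite addrC subrK.
  have := ler_normD (s *: a + w) ((s - 1) *: w).
  rewrite e !normrZ nw (ger0_norm s0) (ger0_norm (_ : 0 <= s - 1)); last lra.
  have : s * (2 - eta) <= s * `|a + w| by rewrite ler_wpM2l.
  nra.
have e : s *: a + w + (1 - s) *: a = a + w.
  by rewrite scalerBl scale1r addrAC [s *: a + _]addrC subrK.
have := ler_normD (s *: a + w) ((1 - s) *: a).
rewrite e normrZ na (ger0_norm (_ : 0 <= 1 - s)); last lra.
nra.
Qed.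

Lemma eq1 (a w d : X) (r : R) : (a + w) + (d - a) + (r - 1) *: w = d + r *: w.
Proof.
rewrite scalerBl scale1r addrC !addrA (addrAC _ a w) subrK (addrAC _ a d) addrK addrC //.
Qed.

Lemma eq3 (x d y0 : X) (r s : R): x + s *: y0 = (r *: x + s *: d) + ((1 - r) *: x + s *: (y0 - d)).
Proof.
rewrite scalerBl scale1r scalerBr !addrA.
rewrite (addrAC (r *: x) (s *: d) x).
rewrite (addrAC _ (s *: d) (- _)).
rewrite (addrC (r *: x) x) addrK.
rewrite (addrAC _ (s *: d)) addrK //.
Qed.

Lemma transfer (a d w : X) (del kap : R) : `|a| = 1 -> `|w| = 1 ->
  `|a - d| <= del -> 2 * `|d| - kap <= `|d + `|d| *: w| ->
  2 - 4 * del - kap <= `|a + w|.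
Proof.
move=> na nw ad h.
have h1 := ler_normD (a + w + (d - a)) ((`|d| - 1) *: w).
have h2 := ler_normD (a + w) (d - a).
rewrite eq1 normrZ nw mulr1 in h1.
have h3 : `| `|d| - 1| <= del.
  by rewrite -na; apply: le_trans (ler_dist_dist _ _) _; rewrite distrC.
have h4 : `|d - a| <= del by rewrite distrC.
have h5 := ler_normD d (a - d).
rewrite addrC subrK na in h5.
lra.
Qed.

Lemma normalize (d y : X) (kap : R) : `|y| != 0 ->
  `|y| * (2 * `|d| - kap) < `| `|y| *: d + `|d| *: y| ->
  2 * `|d| - kap <= `|d + `|d| *: (`|y|^-1 *: y)|.
Proof.
move=> y0 h.
have e : `|y| *: d + `|d| *: y = `|y| *: (d + `|d| *: (`|y|^-1 *: y)).
  by rewrite scalerDr !scalerA mulrAC mulfV // mul1r.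
rewrite e normrZ normr_id in h.
by apply: ltW; rewrite -(ltr_pM2l (_ : 0 < `|y|)) // lt_def y0 normr_ge0.
Qed.

Lemma reverse (x d y0 : X) (eta eps : R) : `|y0| = 1 ->
  (2 - 2 * eta) * `|x| <= `|x + `|x| *: y0| -> `|d - y0| <= eta ->
  0 <= eta -> eta <= 1/4 -> 12 * eta * `|x| <= eps -> 0 < eps ->
  `|d| * (2 * `|x| - eps) < `| `|d| *: x + `|x| *: d|.
Proof.
move=> n0 h dy e0 e1 ex ep.
have h1 := ler_normD (`|d| *: x + `|x| *: d) ((1 - `|d|) *: x + `|x| *: (y0 - d)).
rewrite -eq3 in h1.
have h2 := ler_normD ((1 - `|d|) *: x) (`|x| *: (y0 - d)).
rewrite !normrZ normr_id in h2.
have h3 : `|1 - `|d| | <= eta.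
  by rewrite -n0; apply: le_trans (ler_dist_dist _ _) _; rewrite distrC.
have h4 : `|y0 - d| <= eta by rewrite distrC.
have nx := normr_ge0 x.
have h5 : `|1 - `|d| | * `|x| <= eta * `|x| by rewrite ler_wpM2r.
have h6 : `|x| * `|y0 - d| <= `|x| * eta by rewrite ler_wpM2l.
move: h3; rewrite ler_norml => /andP[h3a h3b].
set a := `|d| in h1 h2 h3a h3b h5 h6 *.
set L := `| a *: x + `|x| *: d| in h1 *.
have p1 : 0 <= (1 + eta - a) * `|x| by apply: mulr_ge0 => //; lra.
have p2 : 0 <= (a - (1 - eta)) * eps by apply: mulr_ge0; lra.
have p3 : 0 <= eta * eps by apply: mulr_ge0; lra.
nra.
Qed.

Lemma dense_approx (D : set X) (z : X) (r : R) : dense D -> 0 < r ->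
  exists d, D d /\ `|z - d| < r.
Proof.
move=> hD r0.
have [d [bd Dd]] := hD (ball z r) (ex_intro _ z (ballxx z r0)) (ball_open z r).
by exists d; split => //; move: bd; rewrite -ball_normE.
Qed.

Lemma dense_inhab (D : set X) : dense D -> exists d, D d.
Proof.
move=> hD; have [d [_ Dd]] := hD setT (ex_intro _ 0 I) openT.
by exists d.
Qed.

Lemma unitize (y : X) : `|y| != 0 -> `| `|y|^-1 *: y| = 1.
Proof. by move=> y0; rewrite normrZ normfV normr_id mulVf. Qed.

Lemma hyp_from (x y0 : X) (eta : R) : `|y0| = 1 ->
  (1 - eta) * (`|x|^-1 * `|x| + 1) <= `| `|x|^-1 *: x + y0| ->
  (2 - 2 * eta) * `|x| <= `|x + `|x| *: y0|.
Proof.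
move=> n0 h.
have [->|x0] := eqVneq x 0; first by rewrite normr0 mulr0 normr_ge0.
have nx0 : `|x| != 0 by rewrite normr_eq0.
have e : x + `|x| *: y0 = `|x| *: (`|x|^-1 *: x + y0).
  by rewrite scalerDr scalerA mulfV // scale1r.
rewrite e normrZ normr_id mulVf // in h *.
rewrite mulrC ler_wpM2l //; lra.
Qed.
End Aux.

Section Part1.
Variables (R : realType) (X : normedModType R) (D : set X).
Hypothesis hD : dense D.

Lemma part1_fwd : LOH X ->
    (forall (eps : R) (x : X), 0 < eps -> D x ->
      exists y : X, D y /\ `|y| != 0 /\ `| `|y| *: x - `|x| *: y| > `|y| * (2 * `|x| - eps) /\ `| `|y| *: x + `|x| *: y| > `|y| * (2 * `|x| - eps)).
Proof.
move=> hL eps x ep Dx.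
set eta := Num.min (1/4) (eps / (12 * (`|x| + 1))).
have nx := normr_ge0 x.
have q0 : 0 < eps / (12 * (`|x| + 1)) by apply: divr_gt0 => //; lra.
have eta0 : 0 < eta by rewrite lt_min q0; lra.
have eta1 : eta <= 1/4 by rewrite ge_min lexx.
have eta2 : 12 * eta * `|x| <= eps.
  have : eta <= eps / (12 * (`|x| + 1)) by rewrite ge_min lexx orbT.
  rewrite ler_pdivlMr; last lra.
  move=> h; have : 0 <= eta * 12 by lra.
  nra.
have [y0 [n0 ht]] := hL eta x eta0.
have Hp : (2 - 2 * eta) * `|x| <= `|x + `|x| *: y0|.
  apply: hyp_from => //; have := ht (`|x|^-1).
  by rewrite n0 ger0_norm // invr_ge0.
have Hm : (2 - 2 * eta) * `|- x| <= `|- x + `|- x| *: y0|.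
  apply: hyp_from => //; have := ht (- `|x|^-1).
  by rewrite n0 normrN ger0_norm ?invr_ge0 // normrN scaleNr scalerN.
have [d [Dd dy]] := dense_approx y0 hD eta0.
have dy' : `|d - y0| <= eta by rewrite distrC ltW.
have d0 : `|d| != 0.
  have := ler_normD d (y0 - d); rewrite addrC subrK n0.
  rewrite distrC in dy'. move=> h; rewrite gt_eqF //; lra.
exists d; split => //; split => //; split.
  have eta2' : 12 * eta * `|- x| <= eps by rewrite normrN.
  have := reverse n0 Hm dy' (ltW eta0) eta1 eta2' ep.
  by rewrite !normrN scalerN distrC (addrC (`|x| *: d)).
exact: reverse n0 Hp dy' (ltW eta0) eta1 eta2 ep.
Qed.

Lemma part1_bwd :
    (forall (eps : R) (x : X), 0 < eps -> D x ->
      exists y : X, D y /\ `|y| != 0 /\ `| `|y| *: x - `|x| *: y| > `|y| * (2 * `|x| - eps) /\ `| `|y| *: x + `|x| *: y| > `|y| * (2 * `|x| - eps)) -> LOH X.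
Proof.
move=> hC eps x ep.
have [->|x0] := eqVneq x 0.
  have [d0 Dd0] := dense_inhab hD.
  have [y [_ [y0 _]]] := hC 1 d0 ltr01 Dd0.
  exists (`|y|^-1 *: y); rewrite unitize //; split => // t.
  rewrite scaler0 add0r unitize // normr0 mulr0 add0r; lra.
have nx0 : `|x| != 0 by rewrite normr_eq0.
have nxp : 0 < `|x| by rewrite normr_gt0.
set u := `|x|^-1 *: x.
have nu : `|u| = 1 by rewrite unitize.
have e8 : 0 < eps / 8 by apply: divr_gt0 => //; lra.
have [d [Dd ud]] := dense_approx u hD e8.
have e2 : 0 < eps / 2 by apply: divr_gt0 => //; lra.
have [y [_ [y0 [cm cp]]]] := hC (eps / 2) d e2 Dd.
set w := `|y|^-1 *: y.
have nw : `|w| = 1 by rewrite unitize.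
have Hp : 2 - eps <= `|u + w|.
  have := transfer nu nw (ltW ud) (normalize y0 cp).
  apply: le_trans; lra.
have Hm : 2 - eps <= `|- u + w|.
  have h : `|y| * (2 * `|- d| - eps / 2) < `| `|y| *: (- d) + `|- d| *: y|.
    by rewrite normrN scalerN (addrC (- (`|y| *: d))) distrC.
  have ud' : `|- u - - d| <= eps / 8 by rewrite -opprD normrN ltW.
  have := transfer (a := - u) (d := - d) (_ : `|- u| = 1) nw ud' (normalize y0 h).
  rewrite normrN; move/(_ nu); apply: le_trans; lra.
exists w; split => // t.
rewrite nw.
have [t0|t0] := leP 0 t.
  have e : t *: x = (t * `|x|) *: u by rewrite /u scalerA mulfK.
  rewrite e (ger0_norm t0).
  have := two_vec nu nw Hp (mulr_ge0 t0 (normr_ge0 x)).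
  by apply: le_trans; rewrite mulrC.
have e : t *: x = (- t * `|x|) *: (- u).
  rewrite /u scalerN -scaleNr scalerA; congr (_ *: _); by field.
rewrite e (ltr0_norm t0).
have nu' : `|- u| = 1 by rewrite normrN.
have := two_vec nu' nw Hm (_ : 0 <= - t * `|x|).
have h1 : 0 <= - t * `|x| by apply: mulr_ge0 => //; lra.
move=> /(_ h1); nra.
Qed.
End Part1.

Section Part2.
Variables (R : realType) (X : normedModType R) (D : set X).
Hypothesis hD : dense D.

Lemma finspan_one n (v : 'I_n -> X) i (r : R) : finspan v (r *: v i).
Proof.
exists (fun j => if j == i then r else 0).
rewrite (bigD1 i) //= eqxx big1 ?addr0 // => j /negPf ->; by rewrite scale0r.
Qed.

Lemma finspan_scale n (v : 'I_n -> X) z (r : R) : finspan v z -> finspan v (r *: z).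
Proof.
move=> [c ->]; exists (fun j => r * c j).
by rewrite scaler_sumr; apply: eq_bigr => j _; rewrite scalerA.
Qed.

Lemma part2_fwd : OH X ->
    (forall (eps : R) (n : nat) (x : 'I_n -> X), 0 < eps ->
      (forall i, D (x i)) ->
      exists y : X, D y /\ `|y| != 0 /\
        forall i, `| `|y| *: x i + `|x i| *: y| > `|y| * (2 * `|x i| - eps)).
Proof.
move=> hO eps n x ep Dx.
set M := \sum_i `|x i|.
have xM i : `|x i| <= M.
  rewrite /M (bigD1 i) //= lerDl; apply: sumr_ge0 => j _; exact: normr_ge0.
have M0 : 0 <= M by apply: sumr_ge0 => j _; exact: normr_ge0.
set eta := Num.min (1/4) (eps / (12 * (M + 1))).
have q0 : 0 < eps / (12 * (M + 1)) by apply: divr_gt0 => //; lra.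
have eta0 : 0 < eta by rewrite lt_min q0; lra.
have eta1 : eta <= 1/4 by rewrite ge_min lexx.
have eta2 i : 12 * eta * `|x i| <= eps.
  have : eta <= eps / (12 * (M + 1)) by rewrite ge_min lexx orbT.
  rewrite ler_pdivlMr; last lra.
  move=> h; have : 0 <= eta * 12 by lra.
  have := xM i; have := normr_ge0 (x i).
  nra.
have [y0 [n0 ht]] := hO n x eta eta0.
have Hp i : (2 - 2 * eta) * `|x i| <= `|x i + `|x i| *: y0|.
  apply: hyp_from => //; have := ht _ (finspan_one x i (`|x i|^-1)).
  by rewrite n0 normrZ normfV normr_id.
have [d [Dd dy]] := dense_approx y0 hD eta0.
have dy' : `|d - y0| <= eta by rewrite distrC ltW.
have d0 : `|d| != 0.
  have := ler_normD d (y0 - d); rewrite addrC subrK n0.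
  rewrite distrC in dy'. move=> h; rewrite gt_eqF //; lra.
exists d; split => //; split => // i.
exact: reverse n0 (Hp i) dy' (ltW eta0) eta1 (eta2 i) ep.
Qed.

Definition NETP n (v : 'I_n -> X) := forall del : R, 0 < del ->
  exists m (u : 'I_m -> X), forall z, finspan v z -> `|z| = 1 ->
    exists j, `|z - u j| < del.



Lemma net_reduce n (v : 'I_n.+1 -> X) (c : 'I_n.+1 -> R) k :
  \sum_i c i *: v i = 0 -> c k != 0 ->
  finspan v `<=` finspan (fun j : 'I_n => v (lift k j)).
Proof.
move=> hc ck z [a ->].
exists (fun j => a (lift k j) - a k / c k * c (lift k j)).
rewrite (bigD1_ord k) //= in hc; rewrite (bigD1_ord k) //=.
have hs : \sum_(j < n) c (lift k j) *: v (lift k j) = - (c k *: v k).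
  by move/eqP: hc; rewrite addrC addr_eq0 => /eqP.
rewrite [RHS](eq_bigr (fun j => a (lift k j) *: v (lift k j) - (a k / c k * c (lift k j)) *: v (lift k j))); last by move=> j _; rewrite scalerBl.
rewrite sumrB.
have e2 : \sum_(j < n) (a k / c k * c (lift k j)) *: v (lift k j)
    = (a k / c k) *: \sum_(j < n) c (lift k j) *: v (lift k j).
  by rewrite scaler_sumr; apply: eq_bigr => j _; rewrite scalerA.
by rewrite e2 hs scalerN opprK scalerA mulfVK // addrC.
Qed.

Lemma normalize_diff (p q : X) : p != 0 -> q != 0 ->
  `|q| * `| `|p|^-1 *: p - `|q|^-1 *: q| <= 2 * `|p - q|.
Proof.
move=> p0 q0.
have np : `|p| != 0 by rewrite normr_eq0.
have nq : `|q| != 0 by rewrite normr_eq0.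
have e : `|q| *: (`|p|^-1 *: p - `|q|^-1 *: q) = (p - q) + (`|q| / `|p| - 1) *: p.
  rewrite scalerBr !scalerA mulfV // scale1r scalerBl scale1r.
  by rewrite [RHS]addrC addrA subrK.
have h := ler_normD (p - q) ((`|q| / `|p| - 1) *: p).
rewrite -e normrZ normr_id normrZ in h.
have e3 : `| `|q| / `|p| - 1| * `|p| = `| `|q| - `|p| |.
  by rewrite -[in LHS](normr_id p) -normrM mulrBl normr_id mulfVK // mul1r.
rewrite e3 in h.
have := ler_dist_dist q p; rewrite (distrC q p) => h2.
lra.
Qed.

Lemma net_indep n (v : 'I_n -> X) :
  (forall c : 'I_n -> R, \sum_i c i *: v i = 0 -> forall i, c i = 0) -> NETP v.
Proof.
move=> hind del del0.
pose Phi (c : 'rV[R]_n) : X := \sum_i c ord0 i *: v i.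
pose S := [set c : 'rV[R]_n | `|c| = 1].
pose L := \sum_i `|v i|.
have L0 : 0 <= L by apply: sumr_ge0 => i _; exact: normr_ge0.
have Phi0 c : S c -> Phi c != 0.
  move=> Sc; apply/eqP => hc.
  have c0 : c = 0.
    apply/matrixP => i j; rewrite (ord1 i) mxE.
    exact: hind (fun i => c ord0 i) hc j.
  by move: Sc; rewrite /S /= c0 normr0 => /esym/eqP; rewrite oner_eq0.
have Lip (c c0 : 'rV[R]_n) (r : R) : (forall i, `|c ord0 i - c0 ord0 i| <= r) ->
    `|Phi c - Phi c0| <= L * r.
  move=> h; rewrite /Phi -sumrB.
  under eq_bigr do rewrite -scalerBl.
  apply: le_trans (ler_norm_sum _ _ _) _.
  rewrite /L mulr_suml; apply: ler_sum => i _.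
  by rewrite normrZ mulrC ler_wpM2l.
have cS : compact S.
  apply: bounded_closed_compact.
    exists 1; split => // M M1 c Sc; change (`|c| <= M); rewrite Sc; exact: ltW.
  apply: (@preimage_closed _ _ (fun c : 'rV[R]_n => `|c|) [set 1]).
    move=> c _; exact: norm_continuous.
  exact: closed_eq.
move: cS; rewrite compact_cover => cS.
pose rad (c0 : 'rV[R]_n) := del * `|Phi c0| / (2 * (L + 1)).
have rad0 c0 : S c0 -> 0 < rad c0.
  move=> Sc; apply: divr_gt0; last lra.
  by apply: mulr_gt0 => //; rewrite normr_gt0; exact: Phi0.
have [D' D'S covD'] : finite_subset_cover S (fun c0 => ball c0 (rad c0)) S.
  apply: cS; first by move=> i _; exact: ball_open.
  by move=> c Sc; exists c => //; exact: ballxx (rad0 c Sc).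
pose N (p : X) := `|p|^-1 *: p.
exists (size (enum_fset D')), (fun j => N (Phi (nth 0 (enum_fset D') j))).
move=> z [a za] nz.
pose c' : 'rV[R]_n := \row_i a i.
have Pc' : Phi c' = z by rewrite za /Phi; apply: eq_bigr => i _; rewrite mxE.
have c'0 : `|c'| != 0.
  rewrite normr_eq0; apply/eqP => h; move: Pc'; rewrite h /Phi.
  under eq_bigr do rewrite mxE scale0r.
  rewrite big1 // => hz; move: nz; rewrite -hz normr0 => /eqP; by rewrite eq_sym oner_eq0.
pose c := `|c'|^-1 *: c'.
have Sc : S c by rewrite /S /= normrZ normfV normr_id (mulVf c'0).
have Pc : Phi c = `|c'|^-1 *: z.
  rewrite -Pc' /Phi scaler_sumr; apply: eq_bigr => i _; rewrite !mxE scalerA //.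
have Nz : N (Phi c) = z.
  rewrite /N Pc normrZ nz mulr1 normfV normr_id invrK scalerA mulfV // scale1r //.
have [c0 c0D bc] := covD' c Sc.
have Sc0 : S c0 by apply: set_mem; apply: D'S.
have ent i : `|c ord0 i - c0 ord0 i| <= rad c0.
  move: bc => [_ /(_ ord0 i)]; rewrite -ball_normE /= distrC => h; exact: ltW.
have c0in : c0 \in enum_fset D' by [].
have ij : (index c0 (enum_fset D') < size (enum_fset D'))%N by rewrite index_mem.
exists (Ordinal ij) => /=; rewrite nth_index // -Nz.
have p0 := Phi0 c Sc; have q0 := Phi0 c0 Sc0.
have h := normalize_diff p0 q0.
have hl := Lip c c0 (rad c0) ent.
have nq : 0 < `|Phi c0| by rewrite normr_gt0.
have r0 := rad0 c0 Sc0.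
have e : rad c0 * (2 * (L + 1)) = del * `|Phi c0|.
  by rewrite /rad mulfVK //; apply: lt0r_neq0; lra.
move: h; rewrite /N; set Y := `|_ - _|.
move=> h; have Y0 : 0 <= Y by exact: normr_ge0.
have : 2 * (L * rad c0) < del * `|Phi c0| by nra.
move=> h2; nra.
Qed.
Lemma net n (v : 'I_n -> X) : NETP v.
Proof.
elim: n v => [|n IH] v.
  move=> del _; exists 0%N, (fun _ => 0) => z [a ->].
  by rewrite big_ord0 normr0 => /eqP; rewrite eq_sym oner_eq0.
have [hind|hdep] := pselect (forall c : 'I_n.+1 -> R,
   \sum_i c i *: v i = 0 -> forall i, c i = 0).
  exact: net_indep.
move: hdep => /existsNP [c /not_implyP [hc /existsNP [k ck]]].
move=> del d0; have [m [u hu]] := IH (fun j => v (lift k j)) del d0.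
exists m, u => z sz nz; apply: hu => //.
by apply: (net_reduce hc) => //; apply/eqP.
Qed.

Lemma part2_bwd :
    (forall (eps : R) (n : nat) (x : 'I_n -> X), 0 < eps ->
      (forall i, D (x i)) ->
      exists y : X, D y /\ `|y| != 0 /\
        forall i, `| `|y| *: x i + `|x i| *: y| > `|y| * (2 * `|x i| - eps))
    -> OH X.
Proof.
move=> hC n v eps ep.
have e16 : 0 < eps / 16 by apply: divr_gt0 => //; lra.
have [m [u hu]] := net v e16.
have : forall j, exists d, D d /\ `|u j - d| < eps / 16.
  move=> j; exact: dense_approx.
move=> /choice [f hf].
have e2 : 0 < eps / 2 by apply: divr_gt0 => //; lra.
have [y [_ [y0 hy]]] := hC (eps / 2) m f e2 (fun j => (hf j).1).
set w := `|y|^-1 *: y.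
have nw : `|w| = 1 by rewrite unitize.
have unitcase z : finspan v z -> `|z| = 1 -> 2 - eps <= `|z + w|.
  move=> sz nz; have [j hj] := hu z sz nz.
  have zf : `|z - f j| <= eps / 8.
    have := ler_normD (z - u j) (u j - f j).
    rewrite addrA subrK; have := (hf j).2; lra.
  have := transfer nz nw zf (normalize y0 (hy j)).
  apply: le_trans; lra.
exists w; split => // z sz.
rewrite nw.
have [->|z0] := eqVneq z 0.
  rewrite add0r normr0 nw; lra.
have nz0 : `|z| != 0 by rewrite normr_eq0.
set a := `|z|^-1 *: z.
have na : `|a| = 1 by rewrite unitize.
have := two_vec na nw (unitcase _ (finspan_scale _ sz) na) (normr_ge0 z).
have -> : `|z| *: a = z by rewrite /a scalerA mulfV // scale1r.
move=> h; nra.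
Qed.
End Part2.

Theorem lemma6p1 (R : realType) (X : completeNormedModType R) (D : set X)
  (hD : dense D) :
  (LOH X <->
    (forall (eps : R) (x : X), 0 < eps -> D x ->
      exists y : X, D y /\ `|y| != 0 /\
        `| `|y| *: x - `|x| *: y| > `|y| * (2 * `|x| - eps) /\
        `| `|y| *: x + `|x| *: y| > `|y| * (2 * `|x| - eps)))
  /\
  (OH X <->
    (forall (eps : R) (n : nat) (x : 'I_n -> X), 0 < eps ->
      (forall i, D (x i)) ->
      exists y : X, D y /\ `|y| != 0 /\
        forall i, `| `|y| *: x i + `|x i| *: y| > `|y| * (2 * `|x i| - eps))).
Proof.
split; split.
- exact: part1_fwd.
- exact: part1_bwd.
- exact: part2_fwd.
- exact: (part2_bwd hD).
Qed.
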